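(* Let $X\subset U\subset\mathbb{R}^n$, where $U$ is open and $X$ is closed in $U$, and let $p\in\mathbb{N}$, $k\ge1$. For $i=0,1,\dots,k$ let $(a_{ij})_{j\ge1}$ be a sequence in $X$ and $(\xi_{ij})_{j\ge1}$ a sequence in $\mathcal{P}_p^*$ such that: (1) the sequences $(a_{ij})_j$, $i=0,\dots,k$, converge to a common point $a\in X$, and $\sum_{i=0}^k\xi_{ij}$ converges to $\xi\in\mathcal{P}_p^*$ as $j\to\infty$; (2) $|a_{ij}-a_{0j}|^{p-|\alpha|}|\xi_{ij,\alpha}(a_{ij})|\le c$ for all $i,j$ and all $|\alpha|\le p$, where $c$ is a constant. If $F=(F^\alpha)_{|\alpha|\le p}$ is a $\mathcal{C}^p$ Whitney field on $X$, then $$\xi(F,a)=\lim_{j\to\infty}\sum_{i=0}^k\xi_{ij}(F,a_{ij}).$$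
   Context: $\mathcal{P}_p$ is the space of real polynomials on $\mathbb{R}^n$ of degree $\le p$, $\mathcal{P}_p^*$ its dual; for $\xi\in\mathcal{P}_p^*$, $b\in\mathbb{R}^n$, $|\alpha|\le p$, $\xi_\alpha(b):=\xi(\tfrac1{\alpha!}(x-b)^\alpha)$. For a family $F=(F^\alpha)_{|\alpha|\le p}$ of functions $F^\alpha:X\to\mathbb{R}$ and $a\in X$, $T^p_aF(x):=\sum_{|\alpha|\le p}\frac1{\alpha!}F^\alpha(a)(x-a)^\alpha$ and $\xi(F,a):=\xi(T^p_aF)$. Set $\delta_\alpha(a,b):=\big(F^\alpha(b)-\sum_{|\beta|\le p-|\alpha|}\frac1{\beta!}F^{\alpha+\beta}(a)(b-a)^\beta\big)/|b-a|^{p-|\alpha|}$ for $a\ne b$ in $X$. $F$ is a $\mathcal{C}^p$ Whitney field on $X$ if for every $c\in X$ and every $|\alpha|\le p$, $\delta_\alpha(a,b)\to0$ as $a,b\to c$ in $X$ with $a\ne b$. *)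

(* Defs.v *)
From HB Require Import structures.
From mathcomp Require Import all_boot all_order all_algebra.
From mathcomp Require Import all_classical all_reals all_analysis.
Set Implicit Arguments. Unset Strict Implicit. Unset Printing Implicit Defensive.
Import Order.TTheory GRing.Theory Num.Theory numFieldNormedType.Exports.
Local Open Scope ring_scope.
Local Open Scope classical_set_scope.

Definition mindex (n : nat) := 'I_n -> nat.
Definition mdeg n (al : mindex n) : nat := (\sum_(i < n) al i)%N.
Definition mfact n (al : mindex n) : nat := (\prod_(i < n) (al i)`!)%N.
Definition mindex_add n (al be : mindex n) : mindex n := fun i => (al i + be i)%N.

(* finite enumeration of multi-indices with all entries <= p *)
Definition bmi (p n : nat) := {ffun 'I_n -> 'I_p.+1}.
Definition of_bmi p n (b : bmi p n) : mindex n := fun i => nat_of_ord (b i).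

Definition sum_mi (R : realType) (p n : nat) (G : mindex n -> R) : R :=
  \sum_(b : bmi p n | (mdeg (of_bmi b) <= p)%N) G (of_bmi b).

Definition enorm (R : realType) n (x : 'rV[R]_n) : R :=
  Num.sqrt (\sum_(i < n) x ord0 i ^+ 2).

Definition mpow (R : realType) n (x : 'rV[R]_n) (al : mindex n) : R :=
  \prod_(i < n) x ord0 i ^+ al i.

Definition poly_le (R : realType) (p n : nat) (f : 'rV[R]_n -> R) : Prop :=
  exists c : mindex n -> R, forall x, f x = sum_mi p (fun al => c al * mpow x al).

(* P_p^* : a functional is an element of the dual of P_p if it is linear on P_p
   (its values outside P_p are irrelevant and never used). *)
Definition dualp (R : realType) (p n : nat) (xi : ('rV[R]_n -> R) -> R) : Prop :=
  forall (f g : 'rV[R]_n -> R) (l : R), poly_le p f -> poly_le p g ->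
    xi (fun x => l * f x + g x) = l * xi f + xi g.

Definition xi_al (R : realType) n (xi : ('rV[R]_n -> R) -> R) (b : 'rV[R]_n)
  (al : mindex n) : R :=
  xi (fun x => (mfact al)%:R^-1 * mpow (x - b) al).

Definition taylor (R : realType) (p n : nat) (F : mindex n -> 'rV[R]_n -> R)
  (a : 'rV[R]_n) : 'rV[R]_n -> R :=
  fun x => sum_mi p (fun al => (mfact al)%:R^-1 * F al a * mpow (x - a) al).

Definition xiF (R : realType) (p n : nat) (xi : ('rV[R]_n -> R) -> R)
  (F : mindex n -> 'rV[R]_n -> R) (a : 'rV[R]_n) : R := xi (taylor p F a).

Definition wdelta (R : realType) (p n : nat) (F : mindex n -> 'rV[R]_n -> R)
  (al : mindex n) (a b : 'rV[R]_n) : R :=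
  (F al b - sum_mi (p - mdeg al)
     (fun be => (mfact be)%:R^-1 * F (mindex_add al be) a * mpow (b - a) be))
  / enorm (b - a) ^+ (p - mdeg al).

Definition whitney_field (R : realType) (p n : nat) (X : set 'rV[R]_n)
  (F : mindex n -> 'rV[R]_n -> R) : Prop :=
  forall c, X c -> forall al : mindex n, (mdeg al <= p)%N ->
  forall e : R, 0 < e -> exists2 eta : R, 0 < eta &
    forall a b, X a -> X b -> a != b -> enorm (a - c) < eta -> enorm (b - c) < eta ->
      `|wdelta p F al a b| < e.

Definition closed_in (T : topologicalType) (U X : set T) : Prop :=
  exists C : set T, closed C /\ X = U `&` C.

(* Main.v *)
Require Import Defs.
From HB Require Import structures.
From mathcomp Require Import all_boot all_order all_algebra.
From mathcomp Require Import all_classical all_reals all_analysis.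
From mathcomp Require Import ring lra.
Import Order.TTheory GRing.Theory Num.Theory numFieldNormedType.Exports.
Set Implicit Arguments. Unset Strict Implicit. Unset Printing Implicit Defensive.
Local Open Scope ring_scope.
Local Open Scope classical_set_scope.
Lemma binom1 (R : realType) p m (u v : R) : (m <= p)%N ->
  (m`!%:R)^-1 * (u + v) ^+ m = \sum_(j < p.+1) (if (j <= m)%N then (j`!%:R)^-1 * u ^+ j * ((m - j)`!%:R^-1 * v ^+ (m - j)) else 0).
Proof.
move=> mp; rewrite addrC exprDn mulr_sumr -big_mkcond /=.
rewrite (big_ord_widen p.+1 (fun j => (m`!%:R)^-1 * (v ^+ (m - j) * u ^+ j *+ 'C(m, j)))); last by [].
apply: eq_big => [j|j]; first by rewrite ltnS.
rewrite ltnS => jm.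
have := bin_fact jm => /(congr1 (fun k => k%:R : R)); rewrite !natrM => h.
have f0 : forall k, (k`!%:R : R) != 0 by move=> k; rewrite pnatr_eq0 -lt0n fact_gt0.
rewrite -mulr_natr -h.
have := f0 j; have := f0 (m - j)%N; move: (j`!%:R : R) ((m-j)`!%:R : R) => a b hb ha.
have hc : ('C(m, j)%:R : R) != 0 by rewrite pnatr_eq0 -lt0n bin_gt0.
field; rewrite ha hb hc //.
Qed.
Definition le_mi n (al be : mindex n) : bool := [forall i, (al i <= be i)%N].
Definition sub_mi n (be al : mindex n) : mindex n := fun i => (be i - al i)%N.

Lemma mfactV (R : realType) n (al : mindex n) : ((mfact al)%:R : R)^-1 = \prod_i ((al i)`!%:R)^-1.
Proof. by rewrite /mfact natr_prod prodfV. Qed.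

Lemma ML (R : realType) n p (g : mindex n) (x A B : 'rV[R]_n) : (forall i, g i <= p)%N ->
 (mfact g)%:R^-1 * mpow (x - A) g = \sum_(al : bmi p n) (if le_mi (of_bmi al) g then ((mfact (of_bmi al))%:R^-1 * mpow (x - B) (of_bmi al)) * ((mfact (sub_mi g (of_bmi al)))%:R^-1 * mpow (B - A) (sub_mi g (of_bmi al))) else 0).
Proof.
move=> hg; rewrite (mfactV _ g) /mpow -big_split /=.
have e : forall i, (x - A) ord0 i = (x - B) ord0 i + (B - A) ord0 i by move=> i; rewrite !mxE; ring.
under eq_bigr do rewrite e (binom1 _ _ (hg _)).
rewrite bigA_distr_bigA /=.
apply: eq_bigr => f _.
case: ifP => [/forallP H | /negbT].
  rewrite !mfactV -!big_split; apply: eq_bigr => i _ /=.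
  by rewrite /of_bmi /sub_mi H.
rewrite negb_forall => /existsP [i Hi].
by rewrite (bigD1 i) //= ifN // mul0r.
Qed.

Lemma poly_le_lin (R : realType) p n (f g : 'rV[R]_n -> R) (l : R) :
  poly_le p f -> poly_le p g -> poly_le p (fun x => l * f x + g x).
Proof.
move=> [c1 h1] [c2 h2]; exists (fun al => l * c1 al + c2 al) => x.
rewrite h1 h2 /sum_mi mulr_sumr -big_split; apply: eq_bigr => b _ /=; ring.
Qed.

Lemma poly_le0 (R : realType) p n : poly_le p (fun _ : 'rV[R]_n => 0).
Proof. by exists (fun _ => 0) => x; rewrite /sum_mi big1 // => b _; rewrite mul0r. Qed.

Lemma poly_le_sum (R : realType) p n (I : Type) (r : seq I) (P : pred I) (l : I -> R)
  (f : I -> 'rV[R]_n -> R) : (forall t, P t -> poly_le p (f t)) ->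
  poly_le p (fun x => \sum_(t <- r | P t) l t * f t x).
Proof.
move=> hf; elim: r => [|t r IH].
  have -> : (fun x => \sum_(t <- [::] | P t) l t * f t x) = fun _ => 0.
    by apply: funext => x; rewrite big_nil.
  exact: poly_le0.
case Pt: (P t).
  have -> : (fun x => \sum_(t0 <- t :: r | P t0) l t0 * f t0 x) =
     (fun x => l t * f t x + \sum_(t0 <- r | P t0) l t0 * f t0 x).
    by apply: funext => x; rewrite big_cons Pt.
  exact: poly_le_lin (hf _ Pt) IH.
have -> : (fun x => \sum_(t0 <- t :: r | P t0) l t0 * f t0 x) =
     (fun x => \sum_(t0 <- r | P t0) l t0 * f t0 x).
  by apply: funext => x; rewrite big_cons Pt.
exact: IH.
Qed.

Lemma le_mdeg n (al : mindex n) i : (al i <= mdeg al)%N.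
Proof. by rewrite /mdeg (bigD1 i) //= leq_addr. Qed.

Lemma mdeg_mono n (al be : mindex n) : le_mi al be -> (mdeg al <= mdeg be)%N.
Proof. by move=> /forallP H; apply: leq_sum => i _; apply: H. Qed.

Lemma poly_le_Pm (R : realType) p n (g : mindex n) (A : 'rV[R]_n) : (mdeg g <= p)%N ->
  poly_le p (fun x => (mfact g)%:R^-1 * mpow (x - A) g).
Proof.
move=> hg.
have hg' : forall i, (g i <= p)%N by move=> i; apply: leq_trans (le_mdeg g i) hg.
exists (fun al => if le_mi al g then (mfact al)%:R^-1 * ((mfact (sub_mi g al))%:R^-1 * mpow (0 - A) (sub_mi g al)) else 0) => x.
rewrite (ML x A 0 hg') /sum_mi [RHS]big_mkcond /=; apply: eq_bigr => b _.
case: ifP => H.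
  rewrite (leq_trans (mdeg_mono H) hg) subr0; ring.
by case: ifP => _; rewrite ?mul0r.
Qed.

Lemma poly_le_add (R : realType) p n (f g : 'rV[R]_n -> R) :
  poly_le p f -> poly_le p g -> poly_le p (fun x => f x + g x).
Proof.
move=> hf hg; have := poly_le_lin 1 hf hg.
by have -> : (fun x => 1 * f x + g x) = (fun x => f x + g x) by apply: funext => x; rewrite mul1r.
Qed.

Lemma dualp0 (R : realType) p n (xi : ('rV[R]_n -> R) -> R) : dualp p xi -> xi (fun _ => 0) = 0.
Proof.
move=> H; have := H _ _ 1 (poly_le0 R p n) (poly_le0 R p n).
have -> : (fun x : 'rV[R]_n => 1 * 0 + 0 : R) = (fun _ => 0) by apply: funext => x; rewrite mul1r addr0.
move=> h; lra.
Qed.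

Lemma dualp_sum (R : realType) p n (xi : ('rV[R]_n -> R) -> R) (g : 'rV[R]_n -> R)
  (I : Type) (r : seq I) (P : pred I) (l : I -> R) (f : I -> 'rV[R]_n -> R) :
  dualp p xi -> poly_le p g -> (forall t, P t -> poly_le p (f t)) ->
  xi (fun x => g x + \sum_(t <- r | P t) l t * f t x) = xi g + \sum_(t <- r | P t) l t * xi (f t).
Proof.
move=> H hg hf; elim: r => [|t r IH].
  rewrite big_nil addr0.
  by have -> : (fun x => g x + \sum_(t <- [::] | P t) l t * f t x) = g by apply: funext => x; rewrite big_nil addr0.
rewrite big_cons; case Pt: (P t); last first.
  by have -> : (fun x => g x + \sum_(t0 <- t :: r | P t0) l t0 * f t0 x) =
     (fun x => g x + \sum_(t0 <- r | P t0) l t0 * f t0 x) by apply: funext => x; rewrite big_cons Pt.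
have -> : (fun x => g x + \sum_(t0 <- t :: r | P t0) l t0 * f t0 x) =
     (fun x => l t * f t x + (g x + \sum_(t0 <- r | P t0) l t0 * f t0 x)).
  by apply: funext => x; rewrite big_cons Pt addrCA.
rewrite H; first by rewrite IH addrCA.
  exact: hf.
apply: poly_le_add => //; exact: poly_le_sum.
Qed.

Lemma sum_mi_widen (R : realType) q N n (G : mindex n -> R) : (q <= N)%N ->
  sum_mi q G = \sum_(b : bmi N n | (mdeg (of_bmi b) <= q)%N) G (of_bmi b).
Proof.
move=> hqN; rewrite /sum_mi.
have hq : (q.+1 <= N.+1)%N by [].
pose h := fun b : bmi q n => [ffun i => widen_ord hq (b i)] : bmi N n.
pose h' := fun b : bmi N n => [ffun i => inord (b i)] : bmi q n.
have ofh : forall b, of_bmi (h b) = of_bmi b.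
  by move=> b; apply: funext => i; rewrite /of_bmi /h ffunE.
symmetry; rewrite (reindex_onto h h').
  apply: eq_big => [b|b _]; last by rewrite ofh.
  rewrite ofh; case: (mdeg _ <= q)%N => //=.
  apply/eqP/ffunP => i; rewrite /h' /h !ffunE; apply: val_inj => /=; rewrite inordK //.
move=> g hg; apply/ffunP => i; rewrite /h' /h !ffunE; apply: val_inj => /=.
rewrite inordK // ltnS; exact: leq_trans (le_mdeg (of_bmi g) i) hg.
Qed.

Lemma mdeg_add n (a b : mindex n) : mdeg (mindex_add a b) = (mdeg a + mdeg b)%N.
Proof. by rewrite /mdeg /mindex_add big_split. Qed.

Definition Sre (R : realType) p n (F : mindex n -> 'rV[R]_n -> R) (al : mindex n) (A B : 'rV[R]_n) : R :=
  sum_mi (p - mdeg al) (fun be => (mfact be)%:R^-1 * F (mindex_add al be) A * mpow (B - A) be).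

Lemma reidx (R : realType) p n (F : mindex n -> 'rV[R]_n -> R) (A B : 'rV[R]_n) (Pa : R) (al : bmi p n) :
  (mdeg (of_bmi al) <= p)%N ->
  \sum_(g : bmi p n | (mdeg (of_bmi g) <= p)%N && le_mi (of_bmi al) (of_bmi g))
     F (of_bmi g) A * (Pa * ((mfact (sub_mi (of_bmi g) (of_bmi al)))%:R^-1 * mpow (B - A) (sub_mi (of_bmi g) (of_bmi al))))
  = Sre p F (of_bmi al) A B * Pa.
Proof.
move=> hal.
rewrite /Sre (sum_mi_widen _ (leq_subr (mdeg (of_bmi al)) p)) mulr_suml.
pose h := fun b : bmi p n => [ffun i => inord (al i + b i)] : bmi p n.
pose h' := fun b : bmi p n => [ffun i => inord (b i - al i)] : bmi p n.
have hval : forall (b : bmi p n) i, (al i + b i <= p)%N -> of_bmi (h b) i = (al i + b i)%N.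
  by move=> b i hi; rewrite /of_bmi /h ffunE inordK // ltnS.
rewrite (reindex_onto h h'); last first.
  move=> g /andP [hg /forallP hle]; apply/ffunP => i; rewrite /h' /h !ffunE; apply: val_inj => /=.
  have hi := hle i; rewrite /of_bmi in hi.
  rewrite (@inordK p (g i - al i)); last by rewrite ltnS (leq_trans (leq_subr _ _)) // -ltnS.
  by rewrite subnKC // inordK.
have bnd : forall b : bmi p n, (mdeg (of_bmi b) <= p - mdeg (of_bmi al))%N -> forall i, (al i + b i <= p)%N.
  move=> b hb i; apply: leq_trans (leq_add (le_mdeg (of_bmi al) i) (le_mdeg (of_bmi b) i)) _.
  by rewrite -leq_subRL.
have hadd : forall b : bmi p n, (mdeg (of_bmi b) <= p - mdeg (of_bmi al))%N -> of_bmi (h b) = mindex_add (of_bmi al) (of_bmi b).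
  by move=> b hb; apply: funext => i; rewrite hval //; apply: bnd.
rewrite (eq_bigl (fun b => (mdeg (of_bmi b) <= p - mdeg (of_bmi al))%N)); last first.
  move=> b.
  apply/idP/idP.
    move=> /andP [/andP [hd /forallP hle] /eqP he].
    have key : forall i, of_bmi (h b) i = (al i + b i)%N.
      move=> i; have := congr1 (fun f : bmi p n => nat_of_ord (f i)) he.
      rewrite /h' ffunE /= inordK; last by rewrite ltnS (leq_trans (leq_subr _ _)) // -ltnS.
      move=> e; have := hle i; rewrite /of_bmi => hi; rewrite /of_bmi -e subnKC //.
    have : of_bmi (h b) = mindex_add (of_bmi al) (of_bmi b) by apply: funext => i; rewrite key.
    move=> e; move: hd; rewrite e mdeg_add => hd; rewrite leq_subRL //.
  move=> hb.
  rewrite hadd // mdeg_add -leq_subRL // hb /=.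
  apply/andP; split.
    by apply/forallP => i; rewrite /mindex_add leq_addr.
  apply/eqP/ffunP => i; rewrite /h' !ffunE; apply: val_inj => /=.
  rewrite (@inordK p (al i + b i)); last by rewrite ltnS bnd.
  by rewrite addKn inordK.
apply: eq_bigr => b hb.
have hs : sub_mi (of_bmi (h b)) (of_bmi al) = of_bmi b.
  by apply: funext => i; rewrite /sub_mi hval ?bnd // addKn.
rewrite hs hadd //; ring.
Qed.

Lemma Reexp (R : realType) p n (F : mindex n -> 'rV[R]_n -> R) (A B x : 'rV[R]_n) :
  taylor p F A x = sum_mi p (fun al => Sre p F al A B * ((mfact al)%:R^-1 * mpow (x - B) al)).
Proof.
rewrite /taylor /sum_mi.
transitivity (\sum_(g : bmi p n | (mdeg (of_bmi g) <= p)%N) \sum_(al : bmi p n)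
   (if le_mi (of_bmi al) (of_bmi g) then F (of_bmi g) A * (((mfact (of_bmi al))%:R^-1 * mpow (x - B) (of_bmi al)) * ((mfact (sub_mi (of_bmi g) (of_bmi al)))%:R^-1 * mpow (B - A) (sub_mi (of_bmi g) (of_bmi al)))) else 0)).
  apply: eq_bigr => g _.
  have hg : forall i, (of_bmi g i <= p)%N by move=> i; rewrite /of_bmi -ltnS.
  rewrite -mulrA mulrCA (ML x A B hg) mulr_sumr; apply: eq_bigr => al _.
  by case: ifP; rewrite ?mulr0.
rewrite exchange_big [RHS]big_mkcond /=; apply: eq_bigr => al _.
rewrite -big_mkcondr.
case: (leqP (mdeg (of_bmi al)) p) => hal.
  exact: reidx.
rewrite big1 // => g /andP [hg hle].
have := leq_trans (mdeg_mono hle) hg; rewrite leqNgt hal //.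
Qed.

Lemma poly_le_taylor (R : realType) p n (F : mindex n -> 'rV[R]_n -> R) (A : 'rV[R]_n) :
  poly_le p (taylor p F A).
Proof.
have := @poly_le_sum R p n _ (index_enum (bmi p n)) (fun b => mdeg (of_bmi b) <= p)%N
  (fun b => F (of_bmi b) A) (fun b x => (mfact (of_bmi b))%:R^-1 * mpow (x - A) (of_bmi b)).
have -> : (fun x => \sum_(t <- index_enum (bmi p n) | (mdeg (of_bmi t) <= p)%N)
    F (of_bmi t) A * ((mfact (of_bmi t))%:R^-1 * mpow (x - A) (of_bmi t))) = taylor p F A.
  apply: funext => x; rewrite /taylor /sum_mi; apply: eq_bigr => b _; ring.
apply => b hb; exact: poly_le_Pm.
Qed.

Lemma KeyXi (R : realType) p n (F : mindex n -> 'rV[R]_n -> R) (xi : ('rV[R]_n -> R) -> R) (A B : 'rV[R]_n) :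
  dualp p xi -> xi (taylor p F B) = xi (taylor p F A) + sum_mi p (fun al => (F al B - Sre p F al A B) * xi_al xi B al).
Proof.
move=> H.
have -> : taylor p F B = (fun x => taylor p F A x + \sum_(b <- index_enum (bmi p n) | (mdeg (of_bmi b) <= p)%N)
    (F (of_bmi b) B - Sre p F (of_bmi b) A B) * ((fun b x => (mfact (of_bmi b))%:R^-1 * mpow (x - B) (of_bmi b)) b x)).
  apply: funext => x; rewrite (Reexp p F A B x) /taylor /sum_mi -big_split /=; apply: eq_bigr => b _; ring.
rewrite (@dualp_sum R p n xi) //; first exact: poly_le_taylor.
move=> b hb; exact: poly_le_Pm.
Qed.

Lemma coord (R : realType) n (v : 'rV[R]_n) i : `|v ord0 i| <= `|v|.
Proof. have -> : `|v| = mx_norm v by []. rewrite mx_normrE. exact: (le_bigmax _ (fun ij : 'I_1 * 'I_n => `|v ij.1 ij.2|) (ord0, i)). Qed.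

Lemma enorm_ge0 (R : realType) n (v : 'rV[R]_n) : 0 <= enorm v.
Proof. exact: sqrtr_ge0. Qed.

Lemma enormN (R : realType) n (v : 'rV[R]_n) : enorm (- v) = enorm v.
Proof. by rewrite /enorm; congr Num.sqrt; apply: eq_bigr => i _; rewrite mxE sqrrN. Qed.

Lemma enorm_sub (R : realType) n (A B : 'rV[R]_n) : enorm (A - B) = enorm (B - A).
Proof. by rewrite -enormN opprB. Qed.

Lemma enorm_eq0 (R : realType) n (v : 'rV[R]_n) : enorm v = 0 -> v = 0.
Proof.
move=> /eqP; rewrite sqrtr_eq0 => h.
have h0 : \sum_(i < n) v ord0 i ^+ 2 = 0.
  by apply/eqP; rewrite eq_le h sumr_ge0 // => i _; exact: sqr_ge0.
apply/rowP => i; rewrite mxE.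
have := @psumr_eq0P _ _ _ _ (fun i _ => sqr_ge0 (v ord0 i)) h0 i isT.
by move=> /eqP; rewrite sqrf_eq0 => /eqP.
Qed.

Lemma enorm_le (R : realType) n (v : 'rV[R]_n) : enorm v <= Num.sqrt n%:R * `|v|.
Proof.
rewrite /enorm; have -> : `|v| = Num.sqrt (`|v| ^+ 2) by rewrite sqrtr_sqr normr_id.
rewrite -sqrtrM // ler_sqrt; last by rewrite mulr_ge0 // sqr_ge0.
have h : forall i, v ord0 i ^+ 2 <= `|v| ^+ 2.
  move=> i; have := coord v i; have := normr_ge0 (v ord0 i).
  rewrite -[v ord0 i ^+ 2]real_normK ?num_real //; move: (`|v ord0 i|) (`|v|) => a b; nra.
apply: le_trans (ler_sum _ (fun i _ => h i)) _.
by rewrite sumr_const card_ord mulr_natl.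
Qed.

Lemma near_enorm (R : realType) n (u : nat -> 'rV[R]_n) (a0 : 'rV[R]_n) :
  u @ \oo --> a0 -> forall eta, 0 < eta -> \forall j \near \oo, enorm (u j - a0) < eta.
Proof.
move=> /cvgrPdist_lt H eta he.
set K := Num.sqrt (n%:R : R).
have K0 : 0 <= K by exact: sqrtr_ge0.
have e0 : 0 < eta / (K + 1) by rewrite divr_gt0 // ltr_wpDl.
apply: filterS (H _ e0) => j hj.
apply: le_lt_trans (enorm_le _) _.
rewrite -normrN opprB.
have hK : 0 < K + 1 by rewrite ltr_wpDl.
move: hj; rewrite ltr_pdivlMr // => hj.
have d0 := normr_ge0 (a0 - u j).
move: (`|a0 - u j|) hj d0 => d hj d0.
change (K * d < eta); clearbody K; nra.
Qed.

Lemma cvg_sum_seq (R : realType) (I : Type) (r : seq I) (P : pred I) (f : I -> nat -> R) (l : I -> R) :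
  (forall t, P t -> f t @ \oo --> l t) ->
  (fun j => \sum_(t <- r | P t) f t j) @ \oo --> \sum_(t <- r | P t) l t.
Proof.
move=> hf; elim: r => [|t r IH].
  rewrite big_nil.
  have -> : (fun j => \sum_(t <- [::] | P t) f t j) = fun _ => 0 by apply: funext => j; rewrite big_nil.
  exact: cvg_cst.
rewrite big_cons; case Pt: (P t).
  have -> : (fun j => \sum_(t0 <- t :: r | P t0) f t0 j) = (fun j => f t j + \sum_(t0 <- r | P t0) f t0 j).
    by apply: funext => j; rewrite big_cons Pt.
  exact: cvgD (hf _ Pt) IH.
have -> : (fun j => \sum_(t0 <- t :: r | P t0) f t0 j) = (fun j => \sum_(t0 <- r | P t0) f t0 j).
  by apply: funext => j; rewrite big_cons Pt.
exact: IH.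
Qed.

Lemma dom0 (R : realType) (e b : nat -> R) :
  (forall j, `|e j| <= b j) -> b @ \oo --> 0 -> e @ \oo --> 0.
Proof.
move=> h /cvgrPdist_lt hb; apply/cvgrPdist_lt => eps he.
apply: filterS (hb _ he) => j; rewrite !sub0r !normrN => hj.
exact: le_lt_trans (h j) (le_lt_trans (ler_norm _) hj).
Qed.

Lemma enorm0 (R : realType) n : enorm (0 : 'rV[R]_n) = 0.
Proof. by rewrite /enorm big1 ?sqrtr0 // => i _; rewrite mxE expr2 mul0r. Qed.

Unset Implicit Arguments.
Set Strict Implicit.

Theorem lemma4p8 (R : realType) (n p k : nat) (U X : set 'rV[R]_n)
  (a : 'I_k.+1 -> nat -> 'rV[R]_n) (xi : 'I_k.+1 -> nat -> ('rV[R]_n -> R) -> R)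
  (a0 : 'rV[R]_n) (xi0 : ('rV[R]_n -> R) -> R) (c : R)
  (F : mindex n -> 'rV[R]_n -> R) :
  open U -> X `<=` U -> closed_in U X -> (1 <= k)%N ->
  (forall i j, X (a i j)) -> (forall i j, dualp p (xi i j)) ->
  X a0 -> dualp p xi0 ->
  (forall i, a i @ \oo --> a0) ->
  (forall f, poly_le p f -> (fun j => \sum_(i < k.+1) xi i j f) @ \oo --> xi0 f) ->
  (forall i j (al : mindex n), (mdeg al <= p)%N ->
     enorm (a i j - a ord0 j) ^+ (p - mdeg al) * `|xi_al (xi i j) (a i j) al| <= c) ->
  whitney_field p X F ->
  (fun j => \sum_(i < k.+1) xiF p (xi i j) F (a i j)) @ \oo --> xiF p xi0 F a0.
Proof.
move=> hU hXU hcl hk hX hdual hXa0 hdual0 ha hxi hc hW.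
set L := xiF p xi0 F a0.
pose S j := \sum_(i < k.+1) xi i j (taylor p F a0).
pose E1 j := \sum_(i < k.+1) (xiF p (xi i j) F (a i j) - xi i j (taylor p F (a ord0 j))).
pose E2 j := \sum_(i < k.+1) (xi i j (taylor p F (a ord0 j)) - xi i j (taylor p F a0)).
have -> : (fun j => \sum_(i < k.+1) xiF p (xi i j) F (a i j)) = fun j => S j + E2 j + E1 j.
  apply: funext => j; rewrite /S /E1 /E2 -!big_split /=; apply: eq_bigr => i _; rewrite /xiF; ring.
rewrite -[L]addr0 -[L]addr0.
apply: (cvgD (f := fun j => S j + E2 j) (g := E1)); first apply: (cvgD (f := S) (g := E2)).
- exact: hxi _ (poly_le_taylor p F a0).
- pose G (al : mindex n) j := if a ord0 j == a0 then 0 else F al a0 - Sre p F al (a ord0 j) a0.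
  pose s (al : mindex n) j := \sum_(i < k.+1) xi_al (xi i j) a0 al.
  have -> : E2 = fun j => - \sum_(b : bmi p n | (mdeg (of_bmi b) <= p)%N) G (of_bmi b) j * s (of_bmi b) j.
    apply: funext => j; rewrite /E2 /G; case e: (a ord0 j == a0).
      rewrite (eqP e) big1 => [|i _]; last by rewrite subrr.
      by rewrite big1 ?oppr0 // => b _; rewrite mul0r.
    have K : forall x y : R, x - (x + y) = - y by move=> x y; ring.
    under eq_bigr => i _ do rewrite (KeyXi F (a ord0 j) a0 (hdual i j)) K.
    rewrite sumrN; congr (- _); rewrite /sum_mi exchange_big /=; apply: eq_bigr => b _.
    by rewrite /s mulr_sumr.
  rewrite -[X in _ --> X]oppr0; apply: cvgN.
  have e0 : \sum_(b : bmi p n | (mdeg (of_bmi b) <= p)%N) 0 * xi0 (fun x => (mfact (of_bmi b))%:R^-1 * mpow (x - a0) (of_bmi b)) = 0.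
    by rewrite big1 // => b _; rewrite mul0r.
  rewrite -[X in _ --> X]e0.
  apply: cvg_sum_seq => b hb.
  apply: cvgM; last exact: (hxi _ (poly_le_Pm a0 hb)).
  apply/cvgrPdist_lt => eps he.
  have [eta he' Hw] := hW a0 hXa0 (of_bmi b) hb eps he.
  apply: filterS2 (near_enorm (ha ord0) he') (near_enorm (ha ord0) ltr01) => j h1 h2.
  rewrite sub0r normrN /G; case: ifP => e; first by rewrite normr0.
  have hne : enorm (a0 - a ord0 j) != 0.
    by apply/eqP => /enorm_eq0 /subr0_eq h; rewrite h eqxx in e.
  have -> : F (of_bmi b) a0 - Sre p F (of_bmi b) (a ord0 j) a0 = wdelta p F (of_bmi b) (a ord0 j) a0 * enorm (a0 - a ord0 j) ^+ (p - mdeg (of_bmi b)).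
    by rewrite /wdelta /Sre divfK // expf_neq0.
  rewrite normrM [X in _ * X]ger0_norm; last by rewrite exprn_ge0 // enorm_ge0.
  have hw : `|wdelta p F (of_bmi b) (a ord0 j) a0| < eps.
    apply: Hw; [exact: hX | exact: hXa0 | by rewrite e | exact: h1 | by rewrite subrr enorm0].
  have hp : enorm (a0 - a ord0 j) ^+ (p - mdeg (of_bmi b)) <= 1.
    by apply: exprn_ile1; [exact: enorm_ge0 | rewrite enorm_sub ltW].
  apply: le_lt_trans _ hw; rewrite -[X in _ <= X]mulr1; apply: ler_wpM2l => //.
pose g i (al : mindex n) j := if a i j == a ord0 j then 0 else `|wdelta p F al (a ord0 j) (a i j)|.
apply: (dom0 (b := fun j => \sum_(i < k.+1) sum_mi p (fun al => g i al j * c))).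
  move=> j; rewrite /E1; apply: le_trans (ler_norm_sum _ _ _) _; apply: ler_sum => i _.
  rewrite /g /xiF; case e: (a i j == a ord0 j).
    rewrite /sum_mi big1; last by move=> b _; rewrite mul0r.
    by rewrite (eqP e) subrr normr0.
  rewrite (KeyXi F (a ord0 j) (a i j) (hdual i j)) addrAC subrr add0r /sum_mi.
  apply: le_trans (ler_norm_sum _ _ _) _; apply: ler_sum => b hb.
  have hne : enorm (a i j - a ord0 j) != 0.
    by apply/eqP => /enorm_eq0 /subr0_eq h; rewrite h eqxx in e.
  have -> : F (of_bmi b) (a i j) - Sre p F (of_bmi b) (a ord0 j) (a i j) = wdelta p F (of_bmi b) (a ord0 j) (a i j) * enorm (a i j - a ord0 j) ^+ (p - mdeg (of_bmi b)).
    by rewrite /wdelta /Sre divfK // expf_neq0.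
  rewrite -mulrA normrM; apply: ler_wpM2l; first exact: normr_ge0.
  rewrite normrM ger0_norm; [exact: hc | by rewrite exprn_ge0 // enorm_ge0].
have e0 : \sum_(i < k.+1) sum_mi p (fun al : mindex n => 0 * c) = 0.
  by rewrite big1 // => i _; rewrite /sum_mi big1 // => b _; rewrite !mul0r.
rewrite -[X in _ --> X]e0.
apply: cvg_sum_seq => i _; apply: cvg_sum_seq => b hb.
apply: (cvgM (f := g i (of_bmi b)) (g := fun _ => c)); last exact: cvg_cst.
apply/cvgrPdist_lt => eps he.
have [eta he' Hw] := hW a0 hXa0 (of_bmi b) hb eps he.
apply: filterS2 (near_enorm (ha ord0) he') (near_enorm (ha i) he') => j h1 h2.
rewrite sub0r normrN /g; case: ifP => e; first by rewrite normr0.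
rewrite normr_id; apply: Hw; [exact: hX | exact: hX | by rewrite eq_sym e | exact: h1 | exact: h2].
Qed.
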